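(* $\mathfrak{L}(\mathrm{rtDVA}(1))\subsetneq\mathfrak{L}(\mathrm{rtDVA}(2))$.
   Context: $\mathfrak{L}(A)$ denotes the class of languages recognized by machines of type $A$. A real-time deterministic vector automaton of dimension $k$ ($\mathrm{rtDVA}(k)$) is a 6-tuple $(Q,\Sigma,\delta,q_0,Q_a,v)$ with finite state set $Q$, initial state $q_0$, accept states $Q_a$, initial row vector $v\in\mathbb{Q}^k$ (freely chosen), and $\delta:Q\times(\Sigma\cup\{\cent,\$\})\times\{=,\neq\}\to Q\times S$, $S$ the set of $k\times k$ rational matrices. The input $w$ is read as $\cent w\$$ left to right, one symbol per step; in state $q$ reading $\sigma$, with $\omega$ equal to ''$=$'' iff the first vector entry equals $1$, if $\delta(q,\sigma,\omega)=(q',M)$ the machine goes to $q'$ and multiplies its row vector on the right by $M$. Acceptance: after processing $\$$, the state is in $Q_a$ and the first vector entry equals $1$. *)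

(* Defs.v *)
From HB Require Import structures.
From mathcomp Require Import all_boot all_order all_algebra.
Set Implicit Arguments. Unset Strict Implicit. Unset Printing Implicit Defensive.
Import Order.TTheory GRing.Theory Num.Theory.
Local Open Scope ring_scope.

Inductive tsym (Sigma : Type) : Type :=
| Cent : tsym Sigma
| Dollar : tsym Sigma
| Sym : Sigma -> tsym Sigma.
Arguments Cent {Sigma}. Arguments Dollar {Sigma}.

Definition first_entry (k : nat) : 'rV[rat]_k -> rat :=
  match k return 'rV[rat]_k -> rat with
  | 0 => fun _ => 0
  | n.+1 => fun v => v ord0 ord0
  end.

(* Real-time deterministic vector automaton of dimension k over alphabet Sigma.
   delta q sigma b : b = true  iff  the first vector entry equals 1 ("=").  *)
Record rtDVA (k : nat) (Sigma : finType) := RtDVA {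
  dva_Q : finType;
  dva_delta : dva_Q -> tsym Sigma -> bool -> dva_Q * 'M[rat]_k;
  dva_q0 : dva_Q;
  dva_Qa : {set dva_Q};
  dva_v : 'rV[rat]_k
}.
Arguments dva_Q {k Sigma} _.
Arguments dva_delta {k Sigma} _ _ _ _.
Arguments dva_q0 {k Sigma} _.
Arguments dva_Qa {k Sigma} _.
Arguments dva_v {k Sigma} _.

Definition dva_step (k : nat) (Sigma : finType) (M : rtDVA k Sigma)
  (c : dva_Q M * 'rV[rat]_k) (s : tsym Sigma) : dva_Q M * 'rV[rat]_k :=
  let: (q, v) := c in
  let: (q', Mx) := dva_delta M q s (first_entry v == 1) in
  (q', v *m Mx).

Definition dva_tape (Sigma : finType) (w : seq Sigma) : seq (tsym Sigma) :=
  Cent :: rcons (map (@Sym Sigma) w) Dollar.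

Definition dva_run (k : nat) (Sigma : finType) (M : rtDVA k Sigma) (w : seq Sigma)
  : dva_Q M * 'rV[rat]_k :=
  foldl (@dva_step k Sigma M) (dva_q0 M, dva_v M) (dva_tape w).

Definition dva_accepts (k : nat) (Sigma : finType) (M : rtDVA k Sigma) (w : seq Sigma)
  : bool :=
  let: (q, v) := dva_run M w in (q \in dva_Qa M) && (first_entry v == 1).

Definition rtDVA_lang (k : nat) (Sigma : finType) (L : seq Sigma -> Prop) : Prop :=
  exists M : rtDVA k Sigma, forall w, L w <-> dva_accepts M w.

(* Main.v *)
Require Import Defs.
From mathcomp Require Import all_boot all_order all_algebra.
From mathcomp Require Import ring.
Set Implicit Arguments. Unset Strict Implicit. Unset Printing Implicit Defensive.
Import Order.TTheory GRing.Theory Num.Theory.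

Section Gen.
Variables (k : nat) (Sigma : finType) (M : rtDVA k Sigma).

Definition pre (w : seq Sigma) :=
  foldl (@dva_step k Sigma M) (@dva_step _ _ M (dva_q0 M, dva_v M) Cent) (map (@Sym Sigma) w).

Definition acc_from (c : dva_Q M * 'rV[rat]_k) : bool :=
  let: (q, v) := @dva_step _ _ M c Dollar in (q \in dva_Qa M) && (first_entry v == 1%R).

Lemma accE w : dva_accepts M w = acc_from (pre w).
Proof.
rewrite /dva_accepts /dva_run /dva_tape /= foldl_rcons /acc_from /pre.
by case: (@dva_step _ _ M _ Dollar).
Qed.

Lemma pre_cat u s : pre (u ++ s) = foldl (@dva_step k Sigma M) (pre u) (map (@Sym Sigma) s).
Proof. by rewrite /pre map_cat foldl_cat. Qed.
End Gen.

Local Open Scope ring_scope.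

Definition vec (c : rat) : 'rV[rat]_2 := \row_(j < 2) (if j == ord0 then c else 1).
Definition B (a d : rat) : 'M[rat]_2 :=
  \matrix_(i < 2, j < 2)
    (if j == ord0 then (if i == ord0 then a else d) else (if i == ord0 then 0 else 1)).

Lemma vecB c a d : vec c *m B a d = vec (c * a + d).
Proof.
apply/rowP => j; rewrite !mxE big_ord_recr big_ord1 /= !mxE.
case: (j == ord0) => /=; rewrite ?mulr0 ?add0r ?mulr1 ?mul1r //.
Qed.

Lemma fe_vec c : first_entry (vec c) = c.
Proof. by rewrite /= mxE. Qed.

Definition embed (Sigma : finType) (M : rtDVA 1 Sigma) : rtDVA 2 Sigma :=
  @RtDVA 2 Sigma (dva_Q M)
    (fun q s b => let: (q', m) := dva_delta M q s b in (q', B (m ord0 ord0) 0))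
    (dva_q0 M) (dva_Qa M) (vec (dva_v M ord0 ord0)).

Lemma step_embed (Sigma : finType) (M : rtDVA 1 Sigma) q (v : 'rV[rat]_1) s :
  @dva_step _ _ (embed M) (q, vec (v ord0 ord0)) s =
  let: (q', v') := @dva_step _ _ M (q, v) s in (q', vec (v' ord0 ord0)).
Proof.
rewrite /dva_step fe_vec /=.
case: (dva_delta M q s _) => q' m.
by rewrite vecB addr0 mxE big_ord1.
Qed.

Lemma fold_embed (Sigma : finType) (M : rtDVA 1 Sigma) s q (v : 'rV[rat]_1) :
  foldl (@dva_step 2 Sigma (embed M)) (q, vec (v ord0 ord0)) s =
  let: (q', v') := foldl (@dva_step 1 Sigma M) (q, v) s in (q', vec (v' ord0 ord0)).
Proof.
elim: s q v => [|x s IH] q v //.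
change (foldl (@dva_step 2 Sigma (embed M)) (@dva_step _ _ (embed M) (q, vec (v ord0 ord0)) x) s =
  let: (q', v') := foldl (@dva_step 1 Sigma M) (@dva_step _ _ M (q, v) x) s in (q', vec (v' ord0 ord0))).
rewrite step_embed; case E: (@dva_step _ _ M (q, v) x) => [q' v'].
exact: IH.
Qed.

Lemma part1 (Sigma : finType) (L : seq Sigma -> Prop) :
  rtDVA_lang 1 L -> rtDVA_lang 2 L.
Proof.
case=> M HM; exists (embed M) => w.
suff -> : dva_accepts (embed M) w = dva_accepts M w by exact: HM.
rewrite /dva_accepts /dva_run.
have -> : dva_v (embed M) = vec (dva_v M ord0 ord0) by [].
have -> : dva_q0 (embed M) = dva_q0 M by [].
rewrite fold_embed; case: (foldl _ _ _) => q v.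
by rewrite fe_vec.
Qed.

Definition Lne (w : seq bool) : Prop := count id w != count negb w.

Definition M2 : rtDVA 2 bool :=
  @RtDVA 2 bool unit
    (fun _ s b => match s with
                  | Cent => (tt, B 1 0)
                  | Sym true => (tt, B 1 1)
                  | Sym false => (tt, B 1 (-1))
                  | Dollar => (tt, if b then B 0 0 else B 0 1)
                  end)
    tt [set: unit] (vec 1).

Lemma fold_M2 w c :
  foldl (@dva_step 2 bool M2) (tt, vec c) (map (@Sym bool) w) =
  (tt, vec (c + (count id w)%:R - (count negb w)%:R)).
Proof.
elim: w c => [|x w IH] c /=.
  by congr (_, vec _); rewrite -(addr0 c) -addrA; congr (_ + _); rewrite subr0.
case: x => /=; rewrite ?fe_vec vecB mulr1 IH; congr (_, vec _);
  rewrite ?add0n ?natrD ?addrA; ring.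
Qed.

Lemma M2_ok : rtDVA_lang 2 Lne.
Proof.
exists M2 => w; rewrite accE /pre.
have -> : @dva_step _ _ M2 (dva_q0 M2, dva_v M2) Cent = (tt, vec 1).
  by rewrite /dva_step /= vecB mulr1 addr0.
rewrite fold_M2 /acc_from /dva_step fe_vec /Lne.
have -> : (1 + (count id w)%:R - (count negb w)%:R == 1 :> rat) =
          (count id w == count negb w).
  have -> : 1 + (count id w)%:R - (count negb w)%:R == 1 :> rat =
      ((count id w)%:R - (count negb w)%:R == 0 :> rat).
    by rewrite -addrA -[X in _ == X](addr0 1) (inj_eq (addrI 1)).
  by rewrite subr_eq0 eqr_nat.
case: (count id w == count negb w) => /=; rewrite vecB ?fe_vec; split => //.
  by rewrite !mxE /= mulr0 addr0 andbF.
by rewrite !mxE /= mulr0 add0r in_setT.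
Qed.

Lemma det1 (M : rtDVA 1 bool) (c c' : dva_Q M * 'rV[rat]_1) :
  acc_from c -> acc_from c' -> c.1 = c'.1 ->
  (first_entry c.2 == 1) = (first_entry c'.2 == 1) -> c = c'.
Proof.
case: c => q y; case: c' => q' y' /= + + Eq; subst q'.
rewrite /acc_from /dva_step /= => + + Ef.
rewrite -Ef.
have yE : forall z : 'rV[rat]_1, z = const_mx (z ord0 ord0).
  by move=> z; apply/rowP => j; rewrite (ord1 j) mxE.
case: (dva_delta M q Dollar (y ord0 ord0 == 1)) => q2 m /andP[_ H] /andP[_ H'].
rewrite !mxE !big_ord1 in H H'.
move/eqP: H => H; move/eqP: H' => H'.
congr (_, _); rewrite (yE y) (yE y'); congr const_mx.
have -> : y ord0 ord0 = y ord0 ord0 * (y' ord0 ord0 * m ord0 ord0) by rewrite H' mulr1.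
by rewrite mulrCA H mulr1.
Qed.

Lemma not1 : ~ rtDVA_lang 1 Lne.
Proof.
case=> M HM.
pose key (i : 'I_#|{: dva_Q M * bool}|.+1) :=
  let c := pre M (nseq i.+1 true) in (c.1, first_entry c.2 == 1).
have accn n : acc_from (pre M (nseq n.+1 true)).
  rewrite -accE; apply/HM; rewrite /Lne !count_nseq /=.
  by [].
have : ~~ injectiveb key.
  apply/negP => /injectiveP Hi; move: (leq_card _ Hi).
  by rewrite card_ord ltnn.
move/injectiveP => Hni.
have [i [j [Hij Ek]]] : exists i j, i != j /\ key i = key j.
  case: (boolP [exists x, exists y, (x != y) && (key x == key y)]).
    by case/existsP => x /existsP [y /andP [H1 /eqP H2]]; exists x, y.
  move=> Hn; exfalso; apply: Hni => x y Exy; apply/eqP; apply/negPn/negP => Hxy.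
  by move/negP: Hn; apply; apply/existsP; exists x; apply/existsP; exists y; rewrite Hxy Exy eqxx.
case: Ek => E1 E2.
have Ep := det1 (accn i) (accn j) E1 E2.
have A1 := HM (nseq i.+1 true ++ nseq i.+1 false).
have A2 := HM (nseq j.+1 true ++ nseq i.+1 false).
rewrite !accE !pre_cat Ep in A1.
rewrite !accE !pre_cat in A2.
have : Lne (nseq j.+1 true ++ nseq i.+1 false).
  rewrite /Lne !count_cat !count_nseq /= !mul1n !mul0n addn0 add0n.
  by rewrite eqSS; apply: contra Hij => /eqP Hji; apply/eqP/val_inj.
move/A2/A1; rewrite /Lne !count_cat !count_nseq /= !mul1n !mul0n addn0 add0n.
by rewrite eqxx.
Qed.

Theorem corollary1 :
  (forall (Sigma : finType) (L : seq Sigma -> Prop),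
      rtDVA_lang 1 L -> rtDVA_lang 2 L) /\
  (exists (Sigma : finType) (L : seq Sigma -> Prop),
      rtDVA_lang 2 L /\ ~ rtDVA_lang 1 L).
Proof.
split; first exact: part1.
by exists bool, Lne; split; [exact: M2_ok | exact: not1].
Qed.
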